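(* Let $L>0$ and let $\alpha,\beta:\mathbb{R}\to\mathbb{R}^2$ be smooth $L$-periodic maps with $\alpha'$ nowhere zero, $\langle\beta,\alpha'\rangle = 0$ and $|\alpha'|^2+|\beta|^2=1$. Let $\gamma(t,s) = \tfrac12(\alpha(s+t)+\alpha(s-t)) + \tfrac12\int_{s-t}^{s+t}\beta(\xi)\,d\xi$, $a=\alpha'+\beta$, $b=\alpha'-\beta$, and let $\psi,\tilde\psi:\mathbb{R}\to\mathbb{R}$ be smooth functions with $a = (\cos\psi,\sin\psi)$ and $b = -(\cos\tilde\psi,\sin\tilde\psi)$. Assume that the closed curve $\alpha$ has non-zero rotation index and that the unit tangent map is continuous. If $\psi(s_0) = \psi(s_1) = \tilde\psi(r_0)$ for some $s_0,s_1,r_0$ with $0 < s_1 - s_0 < L$, then $\psi$ is constant on $(s_0,s_1)$.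
   Context: The unit tangent map is $U(t,s) = \gamma_{,s}(t,s)/|\gamma_{,s}(t,s)|$, defined where $\gamma_{,s}(t,s)\neq 0$; note $2\gamma_{,s}(t,s) = a(s+t)+b(s-t)$. ''The unit tangent map is continuous'' means that for every $t\in\mathbb{R}$, $s\mapsto U(t,s)$ extends to a continuous map on all of $\mathbb{R}$. The rotation index of $\alpha$ is the degree of $\alpha'/|\alpha'|$ as a map from $\mathbb{R}/L\mathbb{Z}$ to the unit circle; $a$ and $b$ have the same degree $d$, so $\psi(s+L)-\psi(s) = \tilde\psi(s+L)-\tilde\psi(s) = 2\pi d$. *)

(* Defs.v *)
From Stdlib Require Import Reals.
From Coquelicot Require Import Coquelicot.
Open Scope R_scope.

Definition smooth (f : R -> R) : Prop :=
  forall (n : nat) (x : R), ex_derive_n f n x.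

Definition smooth2 (f : R -> R * R) : Prop :=
  smooth (fun x => fst (f x)) /\ smooth (fun x => snd (f x)).

Definition periodic2 (L : R) (f : R -> R * R) : Prop :=
  forall x, f (x + L) = f x.

Definition deriv2 (f : R -> R * R) (s : R) : R * R :=
  (Derive (fun x => fst (f x)) s, Derive (fun x => snd (f x)) s).

Definition dot2 (u v : R * R) : R := fst u * fst v + snd u * snd v.
Definition norm2 (u : R * R) : R := sqrt (dot2 u u).

Definition continuous2 (f : R -> R * R) : Prop :=
  forall s, continuous (fun x => fst (f x)) s /\ continuous (fun x => snd (f x)) s.

Definition gamma (alpha beta : R -> R * R) (t s : R) : R * R :=
  ( / 2 * (fst (alpha (s + t)) + fst (alpha (s - t)))
      + / 2 * RInt (fun xi => fst (beta xi)) (s - t) (s + t),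
    / 2 * (snd (alpha (s + t)) + snd (alpha (s - t)))
      + / 2 * RInt (fun xi => snd (beta xi)) (s - t) (s + t) ).

Definition gamma_s (alpha beta : R -> R * R) (t s : R) : R * R :=
  deriv2 (fun s' => gamma alpha beta t s') s.

(* unit tangent map U(t,s) = gamma_s / |gamma_s| (meaningful where gamma_s <> 0) *)
Definition unit_tangent (alpha beta : R -> R * R) (t s : R) : R * R :=
  let g := gamma_s alpha beta t s in (fst g / norm2 g, snd g / norm2 g).

(* "The unit tangent map is continuous": for every t, s |-> U(t,s) extends
   to a continuous map on all of R. *)
Definition unit_tangent_continuous (alpha beta : R -> R * R) : Prop :=
  forall t : R, exists V : R -> R * R,
    continuous2 V /\
    forall s, gamma_s alpha beta t s <> (0, 0) -> V s = unit_tangent alpha beta t s.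

(* Rotation index of the L-periodic curve alpha (alpha' nowhere zero): the degree
   of alpha'/|alpha'| : R/LZ -> S^1, defined through a continuous lift theta. *)
Definition has_rotation_index (L : R) (alpha : R -> R * R) (d : Z) : Prop :=
  exists theta : R -> R,
    (forall s, continuous theta s) /\
    (forall s, deriv2 alpha s = (norm2 (deriv2 alpha s) * cos (theta s),
                                 norm2 (deriv2 alpha s) * sin (theta s))) /\
    theta L - theta 0 = 2 * PI * IZR d.

(* Main.v *)
Require Import Defs.
From Stdlib Require Import Reals Lra Lia ZArith.
From Coquelicot Require Import Coquelicot.
Open Scope R_scope.


Lemma cont_ed (f : R -> R) (x : R) : continuous f x ->
  forall eps, 0 < eps -> exists d, 0 < d /\ forall y, Rabs (y - x) < d -> Rabs (f y - f x) < eps.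
Proof.
  intros Hc eps He.
  apply continuity_pt_filterlim in Hc.
  destruct (Hc eps ltac:(lra)) as [d [Hd H]].
  exists d; split; [lra|]. intros y Hy.
  destruct (Req_dec y x) as [->|Hne].
  - rewrite Rminus_diag, Rabs_R0; lra.
  - apply (H y). split; [split; [exact I| auto]| exact Hy].
Qed.

Lemma smooth_ex (f : R -> R) : smooth f -> forall x, ex_derive f x.
Proof. intros H x. exact (H 1%nat x). Qed.

Lemma smooth_cont (f : R -> R) : smooth f -> forall x, continuous f x.
Proof. intros H x. exact (@ex_derive_continuous R_AbsRing R_NormedModule f x (smooth_ex f H x)). Qed.

Lemma deriv_ed (f : R -> R) x D : is_derive f x D ->
  forall eps, 0 < eps -> exists d, 0 < d /\ forall h, h <> 0 -> Rabs h < d ->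
    Rabs ((f (x + h) - f x) / h - D) < eps.
Proof.
  intros H eps He. apply is_derive_Reals in H.
  destruct (H eps He) as [d Hd]. exists d; split; [apply cond_pos|].
  intros h H1 H2. apply Hd; auto.
Qed.

Lemma deriv_pos_right (f : R -> R) x D : is_derive f x D -> 0 < D ->
  forall d0, 0 < d0 -> exists h, 0 < h < d0 /\ f x < f (x + h).
Proof.
  intros H HD d0 Hd0.
  destruct (deriv_ed f x D H (D/2) ltac:(lra)) as [d [Hd Hh]].
  set (h := Rmin (d/2) (d0/2)).
  assert (0 < h) by (unfold h; apply Rmin_pos; lra).
  assert (h <= d/2) by apply Rmin_l. assert (h <= d0/2) by apply Rmin_r.
  exists h; split; [lra|].
  specialize (Hh h ltac:(lra) ltac:(rewrite Rabs_right; lra)).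
  apply Rabs_def2 in Hh. destruct Hh as [_ Hh].
  assert (0 < (f (x + h) - f x) / h) by lra.
  assert (0 < f (x + h) - f x).
  { replace (f (x + h) - f x) with (((f (x + h) - f x) / h) * h) by (field; lra).
    apply Rmult_lt_0_compat; lra. }
  lra.
Qed.

Lemma deriv_signs (g : R -> R) x D : is_derive g x D -> D <> 0 -> g x = 0 ->
  forall d0, 0 < d0 -> exists h, 0 < h < d0 /\ g (x + h) * g (x - h) < 0.
Proof.
  intros H HD Hg d0 Hd0.
  assert (HaD : 0 < Rabs D) by (apply Rabs_pos_lt; auto).
  destruct (deriv_ed g x D H (Rabs D/2) ltac:(lra)) as [d [Hd Hh]].
  set (h := Rmin (d/2) (d0/2)).
  assert (0 < h) by (unfold h; apply Rmin_pos; lra).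
  assert (h <= d/2) by apply Rmin_l. assert (h <= d0/2) by apply Rmin_r.
  exists h; split; [lra|].
  pose proof (Hh h ltac:(lra) ltac:(rewrite Rabs_right; lra)) as K1.
  pose proof (Hh (-h) ltac:(lra) ltac:(rewrite Rabs_left; lra)) as K2.
  rewrite Hg in K1, K2. replace (x + - h) with (x - h) in K2 by ring.
  replace ((g (x + h) - 0) / h) with (g (x+h) / h) in K1 by (field; lra).
  replace ((g (x - h) - 0) / - h) with (- (g (x-h) / h)) in K2 by (field; lra).
  assert (E1 : g (x + h) = (g (x+h)/h) * h) by (field; lra).
  assert (E2 : g (x - h) = (g (x-h)/h) * h) by (field; lra).
  rewrite E1, E2.
  set (p := g (x+h)/h) in *. set (q := g (x-h)/h) in *.
  destruct (Rle_or_lt 0 D) as [HD0|HD0].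
  - rewrite (Rabs_right D) in K1, K2 by lra.
    apply Rabs_def2 in K1. apply Rabs_def2 in K2.
    assert (0 < p) by lra. assert (q < 0) by lra.
    replace (p * h * (q * h)) with (- (p * (-q) * (h*h))) by ring.
    assert (0 < p * (-q) * (h*h)) by (apply Rmult_lt_0_compat; [apply Rmult_lt_0_compat|apply Rmult_lt_0_compat]; lra). lra.
  - rewrite (Rabs_left D) in K1, K2 by lra.
    apply Rabs_def2 in K1. apply Rabs_def2 in K2.
    assert (p < 0) by lra. assert (0 < q) by lra.
    replace (p * h * (q * h)) with (- ((-p) * q * (h*h))) by ring.
    assert (0 < (-p) * q * (h*h)) by (apply Rmult_lt_0_compat; [apply Rmult_lt_0_compat|apply Rmult_lt_0_compat]; lra). lra.
Qed.

Lemma last_cross (f : R -> R) a b l : (forall x, continuous f x) -> a < b ->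
  f a <= l < f b -> exists p, a <= p < b /\ f p = l /\ forall u, p < u <= b -> l < f u.
Proof.
  intros Hc Hab [H1 H2].
  set (E := fun u => a <= u <= b /\ f u <= l).
  assert (Hb : bound E) by (exists b; intros u [Hu _]; lra).
  assert (Hne : exists x, E x) by (exists a; split; [lra|lra]).
  destruct (completeness E Hb Hne) as [p [Hub Hlub]].
  assert (Hap : a <= p) by (apply Hub; split; lra).
  assert (Hpb : p <= b) by (apply Hlub; intros u [Hu _]; lra).
  assert (Hle : f p <= l).
  { destruct (Rle_or_lt (f p) l) as [|Hgt]; auto. exfalso.
    destruct (cont_ed f p (Hc p) (f p - l) ltac:(lra)) as [d [Hd Hdd]].
    assert (Hub' : is_upper_bound E (p - d/2)).
    { intros u Hu. destruct (Rle_or_lt u (p - d/2)) as [|Hlt]; auto.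
      exfalso. destruct Hu as [Hu1 Hu2]. assert (u <= p) by (apply Hub; split; auto).
      specialize (Hdd u ltac:(rewrite Rabs_left1; lra)).
      apply Rabs_def2 in Hdd. lra. }
    specialize (Hlub _ Hub'). lra. }
  assert (Hpb' : p < b) by (destruct (Req_dec p b); [subst; lra|lra]).
  assert (Hge : l <= f p).
  { destruct (Rle_or_lt l (f p)) as [|Hlt]; auto. exfalso.
    destruct (cont_ed f p (Hc p) (l - f p) ltac:(lra)) as [d [Hd Hdd]].
    set (u := Rmin (p + d/2) b).
    assert (p < u) by (unfold u; apply Rmin_glb_lt; lra).
    assert (u <= p + d/2) by apply Rmin_l. assert (u <= b) by apply Rmin_r.
    assert (E u).
    { split; [lra|]. specialize (Hdd u ltac:(rewrite Rabs_right; lra)).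
      apply Rabs_def2 in Hdd. lra. }
    specialize (Hub u H4). lra. }
  exists p. split; [lra|split; [lra|]].
  intros u Hu. destruct (Rle_or_lt (f u) l) as [Hf|]; auto.
  assert (u <= p) by (apply Hub; split; [lra|auto]). lra.
Qed.

Lemma first_cross (f : R -> R) a b l : (forall x, continuous f x) -> a < b ->
  f a < l <= f b -> exists q, a < q <= b /\ f q = l /\ forall u, a <= u < q -> f u < l.
Proof.
  intros Hc Hab [H1 H2].
  set (F := fun u => - f (- u)).
  assert (HF : forall x, continuous F x).
  { intros x. unfold F. apply continuity_pt_filterlim.
    apply continuity_pt_opp. apply (continuity_pt_comp Ropp f).
    apply continuity_pt_opp, continuity_pt_id. apply continuity_pt_filterlim, Hc. }
  destruct (last_cross F (-b) (-a) (-l) HF ltac:(lra)) as [p [Hp [Hfp Hu]]].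
  { unfold F. rewrite !Ropp_involutive. lra. }
  exists (-p). unfold F in *. split; [lra|split; [lra|]].
  intros u Hu'. specialize (Hu (-u) ltac:(lra)). rewrite Ropp_involutive in Hu. lra.
Qed.

Lemma no_peak (h hd : R -> R) a b x : (forall y, is_derive h y (hd y)) ->
  (forall u1 u2, h u1 = h u2 -> hd u1 = hd u2) -> a < x < b -> h a = h b -> h x <= h a.
Proof.
  intros Hd HM [Hax Hxb] Hab.
  assert (Hc : forall y, continuous h y).
  { intros y. apply (@ex_derive_continuous R_AbsRing R_NormedModule). exists (hd y). apply Hd. }
  destruct (Rle_or_lt (h x) (h a)) as [|HH]; auto. exfalso.
  remember (h a) as c eqn:Ec. remember (h x) as H eqn:EH.
  set (l1 := c + (H - c)/3). set (l2 := c + 2*(H-c)/3).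
  destruct (last_cross h a x l1 Hc Hax ltac:(unfold l1; lra)) as [p [Hp [Hhp Hp']]].
  destruct (first_cross h p x l2 Hc ltac:(lra) ltac:(unfold l1, l2 in *; lra)) as [q [Hq [Hhq Hq']]].
  destruct (MVT_cor2 h hd p q ltac:(lra)) as [xi [Hmvt Hxi]].
  { intros z _. apply is_derive_Reals, Hd. }
  assert (Hl1 : l1 < h xi) by (apply Hp'; lra).
  assert (Hl2 : h xi < l2) by (apply Hq'; lra).
  assert (Hpos : 0 < hd xi).
  { rewrite Hhq, Hhp in Hmvt. unfold l1, l2 in *.
    destruct (Rle_or_lt (hd xi) 0) as [Hn|]; auto.
    assert (hd xi * (q - p) <= 0) by (apply Rmult_le_0_r; lra). lra. }
  set (lam := h xi) in *.
  set (g := fun u => - h u).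
  assert (Hcg : forall y, continuous g y).
  { intros y. unfold g. apply continuity_pt_filterlim, continuity_pt_opp, continuity_pt_filterlim, Hc. }
  destruct (last_cross g x b (-lam) Hcg Hxb ltac:(unfold g, l1, l2 in *; lra)) as [r [Hr [Hgr Hr']]].
  unfold g in Hgr, Hr'.
  assert (Hhr : h r = lam) by lra.
  assert (Hdr : hd r = hd xi) by (apply HM; auto).
  destruct (deriv_pos_right h r (hd r) (Hd r) ltac:(lra) (b - r) ltac:(lra)) as [e [He He']].
  specialize (Hr' (r + e) ltac:(lra)). lra.
Qed.

Lemma cos_sin_eq x y : cos x = cos y -> sin x = sin y -> exists k : Z, x = y + 2*PI*IZR k.
Proof.
  intros Hc Hs.
  assert (H1 := form2 x y). assert (H2 := form4 x y).
  assert (Hz : sin ((x - y)/2) = 0).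
  { destruct (Req_dec (sin ((x - y)/2)) 0) as [|Hn]; auto. exfalso.
    apply (cos_sin_0 ((x+y)/2)). split.
    - apply (Rmult_eq_reg_l (2 * sin ((x - y)/2))); [|intro; apply Hn; lra].
      rewrite Rmult_0_r. lra.
    - apply (Rmult_eq_reg_l (-2 * sin ((x - y)/2))); [|intro; apply Hn; lra].
      rewrite Rmult_0_r. lra. }
  destruct (sin_eq_0_0 _ Hz) as [k Hk]. exists k. lra.
Qed.

Lemma cos_zero_in A : exists y, A <= y <= A + 2*PI /\ cos y = 0.
Proof.
  assert (HP := PI_RGT_0).
  set (z := (A - PI/2)/(2*PI)).
  destruct (archimed z) as [Hu1 Hu2].
  set (n := up z) in *.
  exists (PI/2 + 2*PI*IZR n).
  assert (Ez : A = PI/2 + 2*PI*z) by (unfold z; field; lra).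
  split.
  - rewrite Ez. split.
    + assert (2*PI*z <= 2*PI*IZR n) by (apply Rmult_le_compat_l; lra). lra.
    + assert (2*PI*IZR n <= 2*PI*(z+1)) by (apply Rmult_le_compat_l; lra). lra.
  - apply cos_eq_0_1. exists (2*n)%Z. rewrite mult_IZR. simpl. ring.
Qed.

Lemma derive_per (f : R -> R) L : (forall x, f (x + L) = f x) -> (forall x, ex_derive f x) ->
  Derive f L = Derive f 0.
Proof.
  intros Hp He.
  rewrite <- (Derive_ext (fun x => f (x + L)) f 0 Hp).
  symmetry. apply is_derive_unique.
  replace (Derive f L) with (scal 1 (Derive f (0 + L))).
  2:{ rewrite Rplus_0_l. apply (scal_one (V:=R_NormedModule)). }
  apply (is_derive_comp f (fun x => x + L)).
  - apply Derive_correct, He.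
  - auto_derive; [exact I| ring].
Qed.

Lemma psit_degree (L : R) (alpha beta : R -> R * R) (psit : R -> R) (d : Z)
  (Ha_smooth : smooth2 alpha)
  (Ha_per : periodic2 L alpha) (Hb_per : periodic2 L beta)
  (Ha_reg : forall s, deriv2 alpha s <> (0, 0))
  (Horth : forall s, dot2 (beta s) (deriv2 alpha s) = 0)
  (Hpsit_smooth : smooth psit)
  (Hpsit : forall s, fst (deriv2 alpha s) - fst (beta s) = - cos (psit s) /\
                     snd (deriv2 alpha s) - snd (beta s) = - sin (psit s))
  (Hrot : has_rotation_index L alpha d) :
  psit L - psit 0 = 2 * PI * IZR d.
Proof.
  destruct Hrot as [th [Hthc [Hth Hdeg]]].
  assert (HP := PI_RGT_0).
  set (h := fun s => psit s - th s).
  assert (Hneg : forall s, cos (h s) < 0).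
  { intros s. specialize (Hth s). specialize (Horth s). specialize (Hpsit s).
    specialize (Ha_reg s). unfold h.
    unfold norm2, dot2, deriv2 in *. simpl in *.
    set (a1 := Derive (fun x => fst (alpha x)) s) in *.
    set (a2 := Derive (fun x => snd (alpha x)) s) in *.
    set (n := sqrt (a1 * a1 + a2 * a2)) in *.
    assert (Hpos : 0 < a1 * a1 + a2 * a2).
    { destruct (Req_dec a1 0) as [E1|E1].
      - destruct (Req_dec a2 0) as [E2|E2].
        + exfalso. apply Ha_reg. rewrite E1, E2. reflexivity.
        + assert (0 < a2 * a2) by (apply Rsqr_pos_lt; auto). nra.
      - assert (0 < a1 * a1) by (apply Rsqr_pos_lt; auto). nra. }
    assert (Hn : 0 < n) by (apply sqrt_lt_R0; auto).
    assert (Hn2 : n * n = a1 * a1 + a2 * a2) by (apply sqrt_sqrt; lra).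
    injection Hth as T1 T2.
    destruct Hpsit as [P1 P2].
    assert (E : cos (psit s) * a1 + sin (psit s) * a2 = - (n * n)) by nra.
    rewrite T1, T2 in E. rewrite cos_minus.
    assert (n * (cos (psit s) * cos (th s) + sin (psit s) * sin (th s)) = n * (-n)) by nra.
    apply Rmult_eq_reg_l in H; lra. }
  assert (Hhc : continuity h).
  { intros s. unfold h. apply continuity_pt_minus; apply continuity_pt_filterlim.
    apply smooth_cont, Hpsit_smooth. apply Hthc. }
  destruct Ha_smooth as [Hs1 Hs2].
  assert (Hper1 : Derive (fun x => fst (alpha x)) L = Derive (fun x => fst (alpha x)) 0).
  { apply derive_per. intros x. rewrite Ha_per. reflexivity. apply smooth_ex, Hs1. }
  assert (Hper2 : Derive (fun x => snd (alpha x)) L = Derive (fun x => snd (alpha x)) 0).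
  { apply derive_per. intros x. rewrite Ha_per. reflexivity. apply smooth_ex, Hs2. }
  assert (HbL : beta L = beta 0) by (rewrite <- (Hb_per 0), Rplus_0_l; reflexivity).
  destruct (Hpsit L) as [PL1 PL2]. destruct (Hpsit 0) as [P01 P02].
  unfold deriv2 in *; simpl in *. rewrite Hper1, HbL in PL1. rewrite Hper2, HbL in PL2.
  destruct (cos_sin_eq (psit L) (psit 0)) as [j Hj]; [lra|lra|].
  destruct (Z.eq_dec j d) as [->|Hjd]; [lra|].
  exfalso.
  assert (HhL : h L = h 0 + 2 * PI * IZR (j - d)).
  { unfold h. rewrite minus_IZR. lra. }
  destruct (Z.lt_ge_cases 0 (j - d)%Z) as [Hm|Hm].
  - assert (Hm' : 1 <= IZR (j - d)) by (apply IZR_le; lia).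
    destruct (cos_zero_in (h 0)) as [y [Hy Hcy]].
    destruct (IVT_gen h 0 L y Hhc) as [x [_ Hx]].
    { rewrite Rmin_left, Rmax_right; nra. }
    specialize (Hneg x). rewrite Hx in Hneg. lra.
  - assert (Hm' : IZR (j - d) <= -1) by (apply IZR_le; lia).
    destruct (cos_zero_in (h L)) as [y [Hy Hcy]].
    destruct (IVT_gen h 0 L y Hhc) as [x [_ Hx]].
    { rewrite Rmin_right, Rmax_left; nra. }
    specialize (Hneg x). rewrite Hx in Hneg. lra.
Qed.

Lemma comp_deriv (f g : R -> R) t s : (forall x, ex_derive f x) -> (forall x, continuous g x) ->
  Derive (fun s' => / 2 * (f (s' + t) + f (s' - t)) + / 2 * RInt g (s' - t) (s' + t)) s
  = / 2 * (Derive f (s + t) + Derive f (s - t)) + / 2 * (g (s + t) - g (s - t)).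
Proof.
  intros Hf Hg.
  set (F := fun x => RInt g 0 x).
  assert (Hex : forall a b, ex_RInt g a b).
  { intros a b. apply (@ex_RInt_continuous R_CompleteNormedModule). intros z _. apply Hg. }
  assert (HF : forall x, is_derive F x (g x)).
  { intros x. apply (is_derive_RInt g F 0 x). apply filter_forall. intros b. apply (@RInt_correct R_CompleteNormedModule), Hex.
    apply Hg. }
  assert (Eq : forall s', RInt g (s' - t) (s' + t) = F (s' + t) - F (s' - t)).
  { intros s'. unfold F. pose proof (RInt_Chasles g 0 (s' - t) (s' + t) (Hex _ _) (Hex _ _)) as HC.
    assert (HC' : @eq R (Rplus (RInt g 0 (s'-t)) (RInt g (s'-t) (s'+t))) (RInt g 0 (s'+t))) by exact HC.
    change (@eq R (RInt g (s' - t) (s' + t)) (Rminus (RInt g 0 (s' + t)) (RInt g 0 (s' - t)))).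
    lra. }
  rewrite (Derive_ext _ (fun s' => / 2 * (f (s' + t) + f (s' - t)) + / 2 * (F (s' + t) - F (s' - t)))).
  2:{ intros s'. rewrite Eq. reflexivity. }
  apply is_derive_unique.
  rewrite <- (is_derive_unique F (s+t) (g (s+t)) (HF _)).
  rewrite <- (is_derive_unique F (s-t) (g (s-t)) (HF _)).
  auto_derive.
  - repeat split; try apply Hf; eexists; apply HF.
  - change (fun x => f x) with f. change (fun x => F x) with F. replace (s + - t) with (s - t) by ring. ring.
Qed.

Lemma gs_formula (alpha beta : R -> R * R) (psi psit : R -> R)
  (Ha_smooth : smooth2 alpha) (Hb_smooth : smooth2 beta)
  (Hpsi : forall s, fst (deriv2 alpha s) + fst (beta s) = cos (psi s) /\
                    snd (deriv2 alpha s) + snd (beta s) = sin (psi s))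
  (Hpsit : forall s, fst (deriv2 alpha s) - fst (beta s) = - cos (psit s) /\
                     snd (deriv2 alpha s) - snd (beta s) = - sin (psit s)) t s :
  gamma_s alpha beta t s =
   (- sin ((psi (s+t) - psit (s-t))/2) * sin ((psi (s+t) + psit (s-t))/2),
      sin ((psi (s+t) - psit (s-t))/2) * cos ((psi (s+t) + psit (s-t))/2)).
Proof.
  destruct Ha_smooth as [Ha1 Ha2]. destruct Hb_smooth as [Hb1 Hb2].
  unfold gamma_s, deriv2, gamma. cbn [fst snd].
  rewrite (comp_deriv (fun x => fst (alpha x)) (fun x => fst (beta x)) t s)
    by (first [apply smooth_ex; assumption | apply smooth_cont; assumption]).
  rewrite (comp_deriv (fun x => snd (alpha x)) (fun x => snd (beta x)) t s)
    by (first [apply smooth_ex; assumption | apply smooth_cont; assumption]).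
  destruct (Hpsi (s+t)) as [P1 P2]. destruct (Hpsit (s-t)) as [Q1 Q2].
  unfold deriv2 in *; cbn [fst snd] in *.
  f_equal.
  - rewrite <- (Rmult_1_l (- _)). 
    assert (H := form2 (psi (s+t)) (psit (s-t))). lra.
  - assert (H := form4 (psi (s+t)) (psit (s-t))). lra.
Qed.

Lemma cpt (f : R -> R) : smooth f -> forall x, continuity_pt f x.
Proof. intros H x. apply continuity_pt_filterlim, smooth_cont, H. Qed.

Lemma key (alpha beta : R -> R * R) (psi psit : R -> R)
  (Ha_smooth : smooth2 alpha) (Hb_smooth : smooth2 beta)
  (Hpsi_smooth : smooth psi) (Hpsit_smooth : smooth psit)
  (Hpsi : forall s, fst (deriv2 alpha s) + fst (beta s) = cos (psi s) /\
                    snd (deriv2 alpha s) + snd (beta s) = sin (psi s))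
  (Hpsit : forall s, fst (deriv2 alpha s) - fst (beta s) = - cos (psit s) /\
                     snd (deriv2 alpha s) - snd (beta s) = - sin (psit s))
  (HU : unit_tangent_continuous alpha beta) u v (k : Z) :
  psi u = psit v + 2 * PI * IZR k -> Derive psi u = Derive psit v.
Proof.
  intros Hk.
  destruct (Req_dec (Derive psi u) (Derive psit v)) as [|Hne]; auto. exfalso.
  set (t := (u - v)/2). set (s0 := (u + v)/2).
  assert (Eu : s0 + t = u) by (unfold s0, t; field).
  assert (Ev : s0 - t = v) by (unfold s0, t; field).
  set (dl := fun s => (psi (s+t) - psit (s-t))/2).
  set (mu := fun s => (psi (s+t) + psit (s-t))/2).
  set (g := fun s => sin (dl s)).
  assert (Hdl0 : dl s0 = IZR k * PI) by (unfold dl; rewrite Eu, Ev, Hk; field).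
  assert (Hg0 : g s0 = 0) by (unfold g; apply sin_eq_0_1; exists k; exact Hdl0).
  assert (Hc0 : cos (dl s0) <> 0).
  { intro Hc. apply (cos_sin_0 (dl s0)). split; [exact Hc | exact Hg0]. }
  assert (HD : is_derive g s0 (cos (dl s0) * ((Derive psi u - Derive psit v)/2))).
  { unfold g, dl. auto_derive.
    all: try (repeat split; first [apply smooth_ex; assumption | exact I]).
    change (fun x => psi x) with psi. change (fun x => psit x) with psit.
      replace (s0 + - t) with (s0 - t) by ring. rewrite Eu, Ev. unfold Rminus, Rdiv. ring. }
  assert (HDn : cos (dl s0) * ((Derive psi u - Derive psit v)/2) <> 0).
  { apply Rmult_integral_contrapositive; split; auto. intro; apply Hne; lra. }
  destruct (HU t) as [V [HVc HVeq]].
  set (q := fun s => fst (V s) * (- sin (mu s)) + snd (V s) * cos (mu s)).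
  assert (Hmu : forall s, continuity_pt mu s).
  { intros s. unfold mu. apply continuity_pt_mult.
    apply continuity_pt_plus.
    - apply (continuity_pt_comp (fun s => s + t) psi). apply continuity_pt_plus.
      apply continuity_pt_id. apply continuity_pt_const. intros a b; reflexivity.
      apply cpt; auto.
    - apply (continuity_pt_comp (fun s => s - t) psit). apply continuity_pt_minus.
      apply continuity_pt_id. apply continuity_pt_const. intros a b; reflexivity.
      apply cpt; auto.
    - apply continuity_pt_const. intros a b; reflexivity. }
  assert (Hqc : continuous q s0).
  { apply continuity_pt_filterlim. unfold q.
    destruct (HVc s0) as [C1 C2].
    apply continuity_pt_plus; apply continuity_pt_mult.
    - apply continuity_pt_filterlim, C1.
    - apply continuity_pt_opp. apply (continuity_pt_comp mu sin). apply Hmu. apply continuity_sin.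
    - apply continuity_pt_filterlim, C2.
    - apply (continuity_pt_comp mu cos). apply Hmu. apply continuity_cos. }
  assert (Hqv : forall s, g s <> 0 -> q s = g s / Rabs (g s)).
  { intros s Hgs.
    assert (Hgf : gamma_s alpha beta t s = (- g s * sin (mu s), g s * cos (mu s))).
    { unfold g, dl, mu. apply gs_formula; auto. }
    assert (Hnz : gamma_s alpha beta t s <> (0,0)).
    { rewrite Hgf. intro E. injection E as E1 E2.
      apply (cos_sin_0 (mu s)). split.
      - apply (Rmult_eq_reg_l (g s)); auto. lra.
      - apply (Rmult_eq_reg_l (g s)); auto. lra. }
    unfold q. rewrite (HVeq s Hnz). unfold unit_tangent, norm2, dot2. rewrite Hgf. cbn [fst snd].
    assert (Hs := sin2_cos2 (mu s)). unfold Rsqr in Hs.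
    replace (- g s * sin (mu s) * (- g s * sin (mu s)) + g s * cos (mu s) * (g s * cos (mu s)))
      with (Rsqr (g s)) by (unfold Rsqr; nra).
    rewrite sqrt_Rsqr_abs.
    assert (Ha : 0 < Rabs (g s)) by (apply Rabs_pos_lt; auto).
    transitivity (g s * (sin (mu s) * sin (mu s) + cos (mu s) * cos (mu s)) / Rabs (g s)).
    { unfold Rdiv. ring. }
    rewrite Hs, Rmult_1_r. reflexivity. }
  destruct (cont_ed q s0 Hqc 1 ltac:(lra)) as [d [Hd Hdd]].
  destruct (deriv_signs g s0 _ HD HDn Hg0 d Hd) as [h [Hh Hprod]].
  assert (Q1 := Hdd (s0 + h) ltac:(rewrite Rabs_right; lra)).
  assert (Q2 := Hdd (s0 - h) ltac:(rewrite Rabs_left; lra)).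
  destruct (Rlt_or_le 0 (g (s0 + h))) as [Gp|Gn].
  - assert (Gm : g (s0 - h) < 0).
    { destruct (Rlt_or_le (g (s0 - h)) 0) as [|G]; auto.
      assert (0 <= g (s0 + h) * g (s0 - h)) by (apply Rmult_le_pos; lra). lra. }
    rewrite Hqv in Q1 by lra. rewrite Hqv in Q2 by lra.
    rewrite (Rabs_right (g (s0 + h))) in Q1 by lra. rewrite (Rabs_left (g (s0 - h))) in Q2 by lra.
    replace (g (s0 + h) / g (s0 + h)) with 1 in Q1 by (field; lra).
    replace (g (s0 - h) / - g (s0 - h)) with (-1) in Q2 by (field; lra).
    apply Rabs_def2 in Q1. apply Rabs_def2 in Q2. lra.
  - assert (Gn' : g (s0 + h) < 0).
    { destruct (Req_dec (g (s0 + h)) 0) as [E|]; [|lra]. rewrite E in Hprod. lra. }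
    assert (Gm : 0 < g (s0 - h)).
    { destruct (Rlt_or_le 0 (g (s0 - h))) as [|G]; auto.
      assert (0 <= g (s0 + h) * g (s0 - h)) by nra. lra. }
    rewrite Hqv in Q1 by lra. rewrite Hqv in Q2 by lra.
    rewrite (Rabs_left (g (s0 + h))) in Q1 by lra. rewrite (Rabs_right (g (s0 - h))) in Q2 by lra.
    replace (g (s0 + h) / - g (s0 + h)) with (-1) in Q1 by (field; lra).
    replace (g (s0 - h) / g (s0 - h)) with 1 in Q2 by (field; lra).
    apply Rabs_def2 in Q1. apply Rabs_def2 in Q2. lra.
Qed.
Theorem lemma2p7 (L : R) (alpha beta : R -> R * R) (psi psit : R -> R)
  (s0 s1 r0 : R)
  (HL : 0 < L)
  (Ha_smooth : smooth2 alpha) (Hb_smooth : smooth2 beta)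
  (Ha_per : periodic2 L alpha) (Hb_per : periodic2 L beta)
  (Ha_reg : forall s, deriv2 alpha s <> (0, 0))
  (Horth : forall s, dot2 (beta s) (deriv2 alpha s) = 0)
  (Hnorm : forall s, dot2 (deriv2 alpha s) (deriv2 alpha s) + dot2 (beta s) (beta s) = 1)
  (Hpsi_smooth : smooth psi) (Hpsit_smooth : smooth psit)
  (Hpsi : forall s, fst (deriv2 alpha s) + fst (beta s) = cos (psi s) /\
                    snd (deriv2 alpha s) + snd (beta s) = sin (psi s))
  (Hpsit : forall s, fst (deriv2 alpha s) - fst (beta s) = - cos (psit s) /\
                     snd (deriv2 alpha s) - snd (beta s) = - sin (psit s))
  (Hrot : exists d : Z, d <> 0%Z /\ has_rotation_index L alpha d)
  (HU : unit_tangent_continuous alpha beta)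
  (Heq1 : psi s0 = psi s1) (Heq2 : psi s1 = psit r0)
  (Hs : 0 < s1 - s0 < L) :
  forall x y, s0 < x < s1 -> s0 < y < s1 -> psi x = psi y.
Proof.
  destruct Hrot as [d [Hd0 Hrd]].
  assert (HP := PI_RGT_0).
  assert (Hdeg := psit_degree L alpha beta psit d Ha_smooth Ha_per Hb_per Ha_reg Horth
                   Hpsit_smooth Hpsit Hrd).
  assert (Hct : continuity psit) by (intros z; apply cpt; auto).
  assert (Hcov : forall lam, exists v (k : Z), psit v + 2 * PI * IZR k = lam).
  { intros lam. set (A := psit 0) in *.
    set (z := (lam - A) / (2 * PI)).
    destruct (archimed z) as [Hu1 Hu2].
    set (k := (up z - 1)%Z).
    assert (Hk1 : IZR k <= z) by (unfold k; rewrite minus_IZR; simpl; lra).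
    assert (Hk2 : z < IZR k + 1) by (unfold k; rewrite minus_IZR; simpl; lra).
    assert (Ez : lam - A = 2 * PI * z) by (unfold z; field; lra).
    assert (B1 : 2 * PI * IZR k <= 2 * PI * z) by (apply Rmult_le_compat_l; lra).
    assert (B2 : 2 * PI * z < 2 * PI * (IZR k + 1)) by (apply Rmult_lt_compat_l; lra).
    destruct (Z.lt_ge_cases 0 d) as [Hdp|Hdn].
    - assert (Hd1 : 1 <= IZR d) by (apply IZR_le; lia).
      assert (2 * PI <= 2 * PI * IZR d) by nra.
      destruct (IVT_gen psit 0 L (lam - 2 * PI * IZR k) Hct) as [v [_ Hv]].
      { rewrite Rmin_left, Rmax_right; fold A; lra. }
      exists v, k. lra.
    - assert (Hd1 : IZR d <= -1) by (apply IZR_le; lia).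
      assert (2 * PI * IZR d <= - (2 * PI)) by nra.
      destruct (IVT_gen psit 0 L (lam - 2 * PI * (IZR k + 1)) Hct) as [v [_ Hv]].
      { rewrite Rmin_right, Rmax_left; fold A; lra. }
      exists v, (k + 1)%Z. rewrite plus_IZR. simpl. lra. }
  assert (HM : forall u1 u2, psi u1 = psi u2 -> Derive psi u1 = Derive psi u2).
  { intros u1 u2 E. destruct (Hcov (psi u1)) as [v [k Hv]].
    rewrite (key alpha beta psi psit Ha_smooth Hb_smooth Hpsi_smooth Hpsit_smooth Hpsi Hpsit HU u1 v k)
      by lra.
    rewrite (key alpha beta psi psit Ha_smooth Hb_smooth Hpsi_smooth Hpsit_smooth Hpsi Hpsit HU u2 v k)
      by lra.
    reflexivity. }
  assert (HD : forall y, is_derive psi y (Derive psi y)).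
  { intros y. apply Derive_correct, smooth_ex, Hpsi_smooth. }
  assert (HDn : forall y, is_derive (fun z => - psi z) y (- Derive psi y)).
  { intros y. apply (is_derive_opp psi), HD. }
  assert (Hall : forall x, s0 < x < s1 -> psi x = psi s0).
  { intros x Hx.
    assert (A1 := no_peak psi (Derive psi) s0 s1 x HD HM Hx Heq1).
    assert (A2 := no_peak (fun z => - psi z) (fun z => - Derive psi z) s0 s1 x HDn
                    ltac:(intros u1 u2 E; cbv beta in *; rewrite (HM u1 u2); lra) Hx ltac:(lra)).
    lra. }
  intros x y Hx Hy. rewrite (Hall x Hx), (Hall y Hy). reflexivity.
Qed.
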